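(* Let $U:\mathbb{R}^d\to\mathbb{R}$ satisfy: (A1) $U$ is continuously differentiable and $\|\nabla U(x)-\nabla U(y)\|_2\le L\|x-y\|_2$ for all $x,y$, for some $L>0$; (A3) there exist $m,R>0$ such that for all $x,y\in\mathbb{R}^d$ with $\|x-y\|_2>R$, $\langle\nabla U(x)-\nabla U(y),x-y\rangle\ge m\|x-y\|_2^2$. Let $\kappa=L/m$ and $c=1000$. Let $x,y,w\in\mathbb{R}^d$, $z=x-y$, and $\nabla=\nabla U(x)-\nabla U(y)$. If $\|z\|_2^2+\|z+w\|_2^2\ge2.2R^2$, then $$\left\langle\begin{pmatrix}z\\ z+w\end{pmatrix},\begin{pmatrix}w\\ -w-\frac1{c\kappa L}\nabla\end{pmatrix}\right\rangle\le-\frac1{3(c\kappa)^2}\big(\|z\|_2^2+\|z+w\|_2^2\big).$$ *)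

(* Defs.v *)
From HB Require Import structures.
From mathcomp Require Import all_boot all_order all_algebra.
From mathcomp Require Import all_classical all_reals all_analysis.
Set Implicit Arguments. Unset Strict Implicit. Unset Printing Implicit Defensive.
Import Order.TTheory GRing.Theory Num.Theory.
Local Open Scope ring_scope.

Definition dotv (R : ringType) (d : nat) (u v : 'rV[R]_d) : R :=
  \sum_(i < d) u 0 i * v 0 i.

Definition norm2 (R : rcfType) (d : nat) (u : 'rV[R]_d) : R :=
  Num.sqrt (dotv u u).

(* Main.v *)
Require Import Defs.
From HB Require Import structures.
From mathcomp Require Import all_boot all_order all_algebra.
From mathcomp Require Import all_classical all_reals all_analysis.
From mathcomp Require Import ring lra.
Import Order.TTheory GRing.Theory Num.Theory numFieldNormedType.Exports.
Local Open Scope ring_scope.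
Local Open Scope classical_set_scope.

Section S.
Variables (R : rcfType) (d : nat).
Implicit Types u v w : 'rV[R]_d.

Lemma dotvC u v : dotv u v = dotv v u.
Proof. by apply: eq_bigr => i _; rewrite mulrC. Qed.
Lemma dotvDl u v w : dotv (u + v) w = dotv u w + dotv v w.
Proof. by rewrite /dotv -big_split; apply: eq_bigr => i _; rewrite !mxE mulrDl. Qed.
Lemma dotvDr u v w : dotv w (u + v) = dotv w u + dotv w v.
Proof. by rewrite dotvC dotvDl !(dotvC w). Qed.
Lemma dotvZl k u v : dotv (k *: u) v = k * dotv u v.
Proof. by rewrite /dotv mulr_sumr; apply: eq_bigr => i _; rewrite !mxE mulrA. Qed.
Lemma dotvZr k u v : dotv v (k *: u) = k * dotv v u.
Proof. by rewrite dotvC dotvZl dotvC. Qed.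
Lemma dotvNl u v : dotv (- u) v = - dotv u v.
Proof. by rewrite -scaleN1r dotvZl mulN1r. Qed.
Lemma dotvNr u v : dotv v (- u) = - dotv v u.
Proof. by rewrite dotvC dotvNl dotvC. Qed.
Lemma dotv_ge0 u : 0 <= dotv u u.
Proof. by apply: sumr_ge0 => i _; rewrite -expr2 sqr_ge0. Qed.
Lemma dotv_eq0 u : dotv u u = 0 -> forall v, dotv u v = 0.
Proof.
move=> /eqP; rewrite psumr_eq0; last by move=> i _; rewrite -expr2 sqr_ge0.
move=> /allP H v; apply: big1 => i _.
have /implyP := H i (mem_index_enum _) => /(_ isT).
by rewrite mulf_eq0 orbb => /eqP ->; rewrite mul0r.
Qed.
Lemma norm2_ge0 u : 0 <= norm2 u.
Proof. exact: sqrtr_ge0. Qed.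
Lemma norm2_sq u : norm2 u ^+ 2 = dotv u u.
Proof. by rewrite sqr_sqrtr // dotv_ge0. Qed.
Lemma CS2 u v : dotv u v ^+ 2 <= dotv u u * dotv v v.
Proof.
have [c0|cpos] := eqVneq (dotv v v) 0.
  by rewrite dotvC (@dotv_eq0 v c0 u) c0 expr0n mulr0.
have cp : 0 < dotv v v by rewrite lt_def cpos dotv_ge0.
have := dotv_ge0 (dotv v v *: u - dotv u v *: v).
rewrite dotvDl !dotvDr !dotvNl !dotvNr !dotvZl !dotvZr (dotvC v u) => H.
have : 0 <= dotv v v * (dotv u u * dotv v v - dotv u v ^+ 2) by nra.
by rewrite pmulr_rge0 // subr_ge0.
Qed.
Lemma CS u v : `|dotv u v| <= norm2 u * norm2 v.
Proof.
rewrite -sqrtr_sqr /norm2 -sqrtrM ?dotv_ge0 //.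
by rewrite ler_sqrt ?CS2 // mulr_ge0 // dotv_ge0.
Qed.
Lemma norm2Z k u : norm2 (k *: u) = `|k| * norm2 u.
Proof.
by rewrite /norm2 dotvZl dotvZr mulrA -expr2 sqrtrM ?sqr_ge0 // sqrtr_sqr.
Qed.
Lemma norm2N u : norm2 (- u) = norm2 u.
Proof. by rewrite -scaleN1r norm2Z normrN normr1 mul1r. Qed.
Lemma norm2D u v : norm2 (u + v) <= norm2 u + norm2 v.
Proof.
rewrite -(ler_pXn2r (n:=2)) ?nnegrE ?addr_ge0 ?norm2_ge0 //.
rewrite norm2_sq dotvDl !dotvDr (dotvC v u) sqrrD !norm2_sq.
have := CS u v; have := ler_norm (dotv u v); nra.
Qed.
End S.
Arguments dotvC {R d}.
Arguments dotvDl {R d}.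
Arguments dotvDr {R d}.
Arguments dotvZl {R d}.
Arguments dotvZr {R d}.
Arguments dotvNl {R d}.
Arguments dotvNr {R d}.
Arguments dotv_ge0 {R d}.
Arguments dotv_eq0 {R d}.
Arguments norm2_ge0 {R d}.
Arguments norm2_sq {R d}.
Arguments CS2 {R d}.
Arguments CS {R d}.
Arguments norm2Z {R d}.
Arguments norm2N {R d}.
Arguments norm2D {R d}.

Lemma mleL (R : realType) (d : nat) (gradU : 'rV[R]_d -> 'rV[R]_d) (L m Rr : R) :
  0 < L ->
  (forall x y, norm2 (gradU x - gradU y) <= L * norm2 (x - y)) ->
  0 < m -> 0 < Rr ->
  (forall x y, Rr < norm2 (x - y) ->
     m * norm2 (x - y) ^+ 2 <= dotv (gradU x - gradU y) (x - y)) ->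
  forall v : 'rV[R]_d, 0 < norm2 v -> m <= L.
Proof.
move=> L0 Lip m0 R0 A3 v nv.
set x := ((Rr + 1) / norm2 v) *: v.
have nx : norm2 (x - 0) = Rr + 1.
  rewrite subr0 norm2Z ger0_norm ?divr_ge0 ?addr_ge0 ?ltW //.
  by rewrite divfK // gt_eqF.
have := A3 x 0; rewrite nx ltrDl ltr01 => /(_ isT).
have := CS (gradU x - gradU 0) (x - 0); rewrite nx.
have := Lip x 0; rewrite nx.
have := ler_norm (dotv (gradU x - gradU 0) (x - 0)).
have := norm2_ge0 (gradU x - gradU 0).
move: (dotv _ _) (norm2 (gradU x - gradU 0)) => D G.
have : 0 < Rr + 1 by lra.
move: (Rr + 1) => r r0 G0 h1 h2 h3 h4.
have : m * r ^+ 2 <= L * r ^+ 2 by nra.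
by rewrite ler_pM2r // exprn_gt0.
Qed.
Arguments mleL {R d gradU L m Rr}.

Theorem lemma16 (R : realType) (d : nat) (U : 'rV[R]_d -> R)
  (gradU : 'rV[R]_d -> 'rV[R]_d) (L m Rr : R) :
  (forall x, differentiable U x) ->
  (forall x v, 'd U x v = dotv (gradU x) v) ->
  continuous gradU ->
  0 < L ->
  (forall x y, norm2 (gradU x - gradU y) <= L * norm2 (x - y)) ->
  0 < m -> 0 < Rr ->
  (forall x y, Rr < norm2 (x - y) ->
     m * norm2 (x - y) ^+ 2 <= dotv (gradU x - gradU y) (x - y)) ->
  forall x y w : 'rV[R]_d,
  let z := x - y in
  let g := gradU x - gradU y in
  let kappa := L / m in
  let c : R := 1000 in
  22 / 10 * Rr ^+ 2 <= norm2 z ^+ 2 + norm2 (z + w) ^+ 2 ->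
  dotv z w + dotv (z + w) (- w - (c * kappa * L)^-1 *: g)
    <= - (3 * (c * kappa) ^+ 2)^-1 * (norm2 z ^+ 2 + norm2 (z + w) ^+ 2).
Proof.
move=> _ _ _ L0 Lip m0 R0 A3 x y w z g kappa c HS.
have mL : m <= L.
  have [nzp|nzle] := ltP 0 (norm2 z); first exact: (mleL L0 Lip m0 R0 A3 z nzp).
  have nz0 : norm2 z = 0 by apply/le_anti; rewrite nzle norm2_ge0.
  apply: (mleL L0 Lip m0 R0 A3 (z + w)).
  rewrite lt_def norm2_ge0 andbT; apply/eqP => e; move: HS.
  rewrite nz0 e expr0n /= addr0 => HS.
  have : 0 < Rr ^+ 2 by rewrite exprn_gt0.
  lra.
have eta : (c * kappa * L)^-1 = (m / L) / (1000 * L).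
  by rewrite /c /kappa; field; rewrite ?gt_eqF.
have coef : (3 * (c * kappa) ^+ 2)^-1 = (m / L) ^+ 2 / (3 * 1000 ^+ 2).
  by rewrite /c /kappa; field; rewrite ?gt_eqF.
rewrite eta coef.
have A3z : Rr < norm2 z -> m * norm2 z ^+ 2 <= dotv g z := A3 x y.
have Hg : norm2 g <= L * norm2 z := Lip x y.
clearbody z g.
have rho0 : 0 < m / L by rewrite divr_gt0.
have rho1 : m / L <= 1 by rewrite ler_pdivrMr // mul1r.
have hrho : m = m / L * L by rewrite divfK // gt_eqF.
move: (m / L) rho0 rho1 eta coef hrho => rho rho0 rho1 _ _ hrho.
rewrite dotvDl !dotvDr !dotvNr !dotvZr.
have Pz : dotv z g = dotv g z by rewrite dotvC.
have hu : norm2 (z + w) ^+ 2 = norm2 z ^+ 2 + 2 * dotv z w + norm2 w ^+ 2.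
  by rewrite !norm2_sq dotvDl !dotvDr (dotvC w z); ring.
have tri1 := norm2D z w.
have tri2 : norm2 w <= norm2 (z + w) + norm2 z.
  have e : z + w - z = w by rewrite addrC addKr.
  by have := norm2D (z + w) (- z); rewrite norm2N e.
have Cw := CS w g.
have Cu : `|dotv z g + dotv w g| <= norm2 (z + w) * norm2 g.
  by rewrite -dotvDl; exact: CS.
have Cz := CS g z.
have nz0 := norm2_ge0 z; have nw0 := norm2_ge0 w.
have nu0 := norm2_ge0 (z + w); have ng0 := norm2_ge0 g.
rewrite -[dotv w w]norm2_sq.
have eta0 : 0 < rho / (1000 * L).
  have h : (0:R) < 1000 by rewrite ltr0n.
  exact: (divr_gt0 rho0 (mulr_gt0 h L0)).
have [big|small] := ltP Rr (norm2 z).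
- have Hz := A3z big.
  have Pw := ler_norm (dotv w g).
  rewrite Pz hu.
  have Zw : 2 * dotv z w <= 2 * norm2 z * norm2 w.
    have : norm2 (z + w) ^+ 2 <= (norm2 z + norm2 w) ^+ 2.
      by rewrite ler_pXn2r // ?nnegrE ?addr_ge0.
    rewrite hu; nra.
  move: (dotv g z) (dotv w g) (dotv z w) Hz Pw Cw Zw => Gz Gw Zw Hz Pw Cw Zw'.
  move: (norm2 z) (norm2 w) (norm2 g) nz0 nw0 ng0 Hg Hz Cw Zw' => a b n a0 b0 n0 Hg Hz Cw Zw'.
  have e1 : rho ^+ 2 * a ^+ 2 / 1000 <= rho / (1000 * L) * Gz.
    have -> : rho ^+ 2 * a ^+ 2 / 1000 = rho / (1000 * L) * (m * a ^+ 2).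
      by rewrite hrho; field; rewrite gt_eqF.
    by rewrite (ler_pM2l eta0).
  have Pw2 : - Gw <= `|Gw| by rewrite -normrN ler_norm.
  have e2 : - (rho / (1000 * L) * Gw) <= rho * a * b / 1000.
    have -> : rho * a * b / 1000 = rho / (1000 * L) * (b * (L * a)).
      by field; rewrite gt_eqF.
    rewrite -mulrN (ler_pM2l eta0).
    have : b * n <= b * (L * a) by rewrite ler_wpM2l.
    lra.
  move: (rho / (1000 * L) * Gz) (rho / (1000 * L) * Gw) e1 e2 => X Y e1 e2.
  have ZwL : Zw <= a * b by lra.
  have F3 : rho ^+ 2 * (a ^+ 2 + (a ^+ 2 + 2 * Zw + b ^+ 2))
      <= 2 * (rho * a) ^+ 2 + 2 * (rho * a * b) + b ^+ 2.
    have r2 : 0 <= rho ^+ 2 by rewrite sqr_ge0.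
    have g1 : rho ^+ 2 * Zw <= rho ^+ 2 * (a * b) by rewrite ler_wpM2l.
    have g2 : rho ^+ 2 * (a * b) <= rho * a * b.
      have : rho * (rho * a * b) <= 1 * (rho * a * b).
        by rewrite ler_wpM2r ?mulr_ge0 // ltW.
      by rewrite mul1r; congr (_ <= _); ring.
    have g3 : rho ^+ 2 * b ^+ 2 <= b ^+ 2.
      rewrite -[X in _ <= X]mul1r ler_wpM2r ?sqr_ge0 //.
      by rewrite expr_le1 // ltW.
    have -> : rho ^+ 2 * (a ^+ 2 + (a ^+ 2 + 2 * Zw + b ^+ 2)) =
      2 * (rho * a) ^+ 2 + 2 * (rho ^+ 2 * Zw) + rho ^+ 2 * b ^+ 2 by ring.
    lra.
  have F1 : (rho * a) ^+ 2 / 1000 <= X by rewrite exprMn.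
  have F4 := sqr_ge0 (rho * a - b).
  have -> : - (rho ^+ 2 / (3 * 1000 ^+ 2)) * (a ^+ 2 + (a ^+ 2 + 2 * Zw + b ^+ 2))
     = - (rho ^+ 2 * (a ^+ 2 + (a ^+ 2 + 2 * Zw + b ^+ 2))) / (3 * 1000 ^+ 2).
    by field.
  move: (rho ^+ 2 * (a ^+ 2 + (a ^+ 2 + 2 * Zw + b ^+ 2))) F3 => K F3.
  move: (rho * a) F1 F3 F4 e2 => p F1 F3 F4 e2.
  have F4' : 2 * (p * b) <= p ^+ 2 + b ^+ 2.
    by move: F4; rewrite sqrrB mulr2n; lra.
  clear F4.
  have := sqr_ge0 p; have := sqr_ge0 b; lra.
- set eta := rho / (1000 * L).
  set nu := norm2 (z + w) in Cu tri1 tri2 nu0 HS *.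
  have ngR : norm2 g <= L * Rr.
    by apply: (le_trans Hg); rewrite ler_wpM2l // ltW.
  have Q1 : - (eta * (dotv z g + dotv w g)) <= rho * nu * Rr / 1000.
    have -> : rho * nu * Rr / 1000 = eta * (nu * (L * Rr)).
      by rewrite /eta; field; rewrite gt_eqF.
    rewrite -mulrN (ler_pM2l eta0).
    have := ler_norm (- (dotv z g + dotv w g)); rewrite normrN => h.
    have : nu * norm2 g <= nu * (L * Rr) by rewrite ler_wpM2l.
    lra.
  have Q2 : rho * nu * Rr <= nu * Rr.
    have := mulr_ge0 nu0 (ltW R0); nra.
  have S0 : 0 <= norm2 z ^+ 2 + nu ^+ 2 by rewrite addr_ge0 ?sqr_ge0.
  have Q3 : rho ^+ 2 * (norm2 z ^+ 2 + nu ^+ 2) <= norm2 z ^+ 2 + nu ^+ 2.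
    rewrite -[X in _ <= X]mul1r ler_wpM2r //.
    by rewrite expr_le1 // ltW.
  have -> : - (rho ^+ 2 / (3 * 1000 ^+ 2)) * (norm2 z ^+ 2 + nu ^+ 2)
     = - (rho ^+ 2 * (norm2 z ^+ 2 + nu ^+ 2)) / (3 * 1000 ^+ 2).
    by field.
  have ->: dotv z w + (- dotv z w - eta * dotv z g + (- norm2 w ^+ 2 - eta * dotv w g))
     = - (eta * (dotv z g + dotv w g)) - norm2 w ^+ 2 by ring.
  move: (rho ^+ 2 * (norm2 z ^+ 2 + nu ^+ 2)) Q3 => K Q3.
  move: (- (eta * (dotv z g + dotv w g))) Q1 => Q Q1.
  have nz2 : norm2 z ^+ 2 <= Rr ^+ 2 by rewrite ler_pXn2r // ?nnegrE // ltW.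
  have nuR : 109 / 100 * Rr <= nu.
    rewrite leNgt; apply/negP => h.
    have h0 : 0 <= 109 / 100 * Rr by rewrite mulr_ge0 // ltW.
    have : nu ^+ 2 < (109 / 100 * Rr) ^+ 2 by rewrite ltr_pXn2r // nnegrE.
    rewrite exprMn; nra.
  have nwR : nu - Rr <= norm2 w by lra.
  have t0 : 0 <= nu - Rr by nra.
  have : (nu - Rr) ^+ 2 <= norm2 w ^+ 2 by rewrite ler_pXn2r // nnegrE.
  have := sqr_ge0 Rr.
  have : 9 / 100 * Rr * (nu - Rr) <= (nu - Rr) * (nu - Rr).
    have : 9 / 100 * Rr <= nu - Rr by lra.
    nra.
  have : 9 / 100 * Rr * Rr <= Rr * (nu - Rr).
    have : 9 / 100 * Rr <= nu - Rr by lra.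
    nra.
  have := sqr_ge0 (norm2 w); have := sqr_ge0 nu.
  lra.
Qed.
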